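(* Let $a_0,a_1,a_2$ be real numbers and let $(F(n,k))_{n\ge 0,\,k\in\mathbb{Z}}$ be defined by $F(0,0)=1$, $F(n,k)=0$ whenever $k<0$ or $k>n$, and \[ F(n,k)=F(n-1,k-1)+(a_2n+a_1k+a_0)\,F(n-1,k)\qquad(n\ge1). \] Then for all integers $0\le k\le n$, \[ F(n,k)=\sum_{1\le p_1<p_2<\cdots<p_{n-k}\le n}\ \prod_{i=1}^{n-k}\big((a_2+a_1)p_i-a_1 i+a_0\big). \]
   Context: The sum runs over all strictly increasing sequences of $n-k$ integers in $\{1,\dots,n\}$; an empty product equals $1$. *)

(* Defs.v *)
From HB Require Import structures.
From mathcomp Require Import all_boot all_order all_algebra.
From mathcomp Require Import reals.
Set Implicit Arguments. Unset Strict Implicit. Unset Printing Implicit Defensive.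
Import Order.TTheory GRing.Theory Num.Theory.
Local Open Scope ring_scope.

Fixpoint F (R : realType) (a0 a1 a2 : R) (n : nat) (k : int) {struct n} : R :=
  match n with
  | 0%N => if k == 0%Z then 1 else 0
  | m.+1 => if (k < 0)%R || (m.+1%:Z < k)%R then 0
            else F a0 a1 a2 m (k - 1) +
                 (a2 * m.+1%:R + a1 * k%:~R + a0) * F a0 a1 a2 m k
  end.

(* Main.v *)
Require Import Defs.
From HB Require Import structures.
From mathcomp Require Import all_boot all_order all_algebra.
From mathcomp Require Import reals ring.
Import Order.TTheory GRing.Theory Num.Theory.

Lemma sorted_rconsE (s : seq nat) x :
  sorted ltn (rcons s x) = sorted ltn s && all (fun y => y < x) s.
Proof.
rewrite -rev_sorted rev_rcons /= path_sortedE; last first.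
  by move=> a b c /= H1 H2; apply: ltn_trans H2 H1.
rewrite rev_sorted all_rev andbC; congr (_ && _).
Qed.

Fixpoint seqs (n j : nat) : seq (seq nat) :=
  match n, j with
  | _, 0 => [:: [::]]
  | 0, _.+1 => [::]
  | m.+1, i.+1 => seqs m j ++ [seq rcons s m.+1 | s <- seqs m i]
  end.

Lemma mem_seqs n j s :
  (s \in seqs n j) = [&& size s == j, sorted ltn s & all (fun x => 0 < x <= n) s].
Proof.
elim: n j s => [|n IH] [|j] s.
- by case: s.
- by rewrite in_nil; case: s => [|x s] //; case: x => [|x]; rewrite /= ?andbF.
- by case: s.
rewrite /= mem_cat IH.
case/lastP: s => [|s x].
  by rewrite /=; apply/mapP => -[s' _]; case: s'.
rewrite size_rcons eqSS sorted_rconsE all_rcons.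
have -> : (rcons s x \in [seq rcons s0 n.+1 | s0 <- seqs n j]) =
          (x == n.+1) && (s \in seqs n j).
  case: eqP => [->|nx]; first by rewrite (mem_map (@rcons_injl _ n.+1)).
  by apply/mapP => -[s' _ E]; apply: nx; have := congr1 (last 0) E; rewrite !last_rcons.
rewrite IH !all_rcons.
case: (size s == j); case: (sorted ltn s); rewrite /= ?andbF //.
case: (ltngtP x n.+1) => Hx /=.
- rewrite ltnS in Hx; rewrite Hx !andbT orbF.
  have [C|C] := boolP (all (fun y => y < x) s); last by [].
  rewrite /=; congr (_ && _).
  apply: eq_in_all => y yin; move/allP: C => /(_ y yin) yx.
  rewrite !(leq_trans (ltnW yx)) ?andbT //; apply: leq_trans Hx _; exact: leqnSn.
- by rewrite [x <= n]leqNgt (ltn_trans (ltnSn n) Hx) /= !andbF.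
- rewrite Hx ltnn /= ?andbF /= ?andbT.
  apply/idP/idP.
    move/allP => H; apply/andP; split; apply/allP => y /H /andP [y0 yn].
      by rewrite ltnS.
    by rewrite y0 (leq_trans yn (leqnSn n)).
  move/andP => [/allP H1 /allP H2]; apply/allP => y yin.
  by case/andP: (H2 y yin) => -> _; rewrite /= -ltnS; exact: H1.
Qed.
Local Open Scope ring_scope.

Lemma seqs_nil n j : (n < j)%N -> seqs n j = [::].
Proof.
elim: n j => [|n IH] [|j] //= H.
by rewrite !IH // ltnW.
Qed.

Lemma uniq_seqs n j : uniq (seqs n j).
Proof.
elim: n j => [|n IH] [|j] //=.
rewrite cat_uniq IH (map_inj_uniq (@rcons_injl _ n.+1)) IH andbT /=.
apply/hasP => -[s /mapP [s' _ ->]]; rewrite mem_seqs all_rcons ltnn.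
by rewrite !andbF.
Qed.

Lemma F_neg (R : realType) (a0 a1 a2 : R) m : F a0 a1 a2 m (-1) = 0.
Proof. by case: m. Qed.

Lemma F_big (R : realType) (a0 a1 a2 : R) m k : (m < k)%N -> F a0 a1 a2 m k%:Z = 0.
Proof.
case: m => [|m] H /=; first by case: k H.
by rewrite ltz_nat H.
Qed.

Section W.
Variables (R : realType) (a0 a1 a2 : R).
Definition w (p i : nat) : R := (a2 + a1) * p%:R - a1 * i%:R + a0.
Definition weight (s : seq nat) : R := \prod_(0 <= i < size s) w (nth 0%N s i) i.+1.
Definition S n j := \sum_(s <- seqs n j) weight s.

Lemma weight_rcons s x : weight (rcons s x) = weight s * w x (size s).+1.
Proof.
rewrite /weight size_rcons big_nat_recr //= nth_rcons ltnn eqxx; congr (_ * _).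
by apply: eq_big_nat => i /andP [_ H]; rewrite nth_rcons H.
Qed.

Lemma S0 n : S n 0 = 1.
Proof. by case: n => [|n]; rewrite /S /= big_seq1 /weight big_nil. Qed.

Lemma SS n j : S n.+1 j.+1 = S n j.+1 + S n j * w n.+1 j.+1.
Proof.
rewrite /S /= big_cat big_map /= big_distrl /=; congr (_ + _).
rewrite big_seq_cond [RHS]big_seq_cond; apply: eq_bigr => s /andP [H _].
rewrite weight_rcons; move: H; rewrite mem_seqs => /andP [/eqP -> _] //.
Qed.

Lemma FS n k : (k <= n)%N -> F a0 a1 a2 n k%:Z = S n (n - k).
Proof.
elim: n k => [|n IH] k.
  by rewrite leqn0 => /eqP ->; rewrite S0.
move=> Hk /=.
rewrite ltz_nat ltnNge Hk /=.
case: k Hk => [|k] Hk.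
  rewrite sub0r F_neg add0r (IH 0%N) // !subn0 SS /S (@seqs_nil n n.+1 (ltnSn n)) big_nil add0r -/(S n n).
  rewrite /w -pmulrn; ring.
have -> : (k.+1%:Z - 1 = k%:Z)%R by rewrite -addn1 PoszD addrK.
rewrite IH // subSS.
move: Hk; rewrite ltnS leq_eqVlt => /orP [/eqP->|Hlt].
  by rewrite F_big // mulr0 addr0 subnn !S0.
have [j Hj] : exists j, (n - k = j.+1)%N by exists (n-k).-1; rewrite prednK // subn_gt0.
rewrite Hj SS IH // (subnS n k) Hj /=.
have En : n = (j.+1 + k)%N by rewrite -Hj subnK // ltnW.
rewrite /w -pmulrn En. have e : (j.+1 + k).+1%:R = j.+1%:R + k.+1%:R :> R by rewrite -natrD addnS. rewrite e; ring.
Qed.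
End W.

Theorem mainTheorem2 (R : realType) (a0 a1 a2 : R) (n k : nat) :
  (k <= n)%N ->
  F a0 a1 a2 n k%:Z =
  \sum_(t : (n - k).-tuple 'I_n.+1 |
          sorted ltn [seq val x | x <- t] && all (fun x : 'I_n.+1 => 0 < val x)%N t)
     \prod_(i < n - k)
        ((a2 + a1) * (val (tnth t i))%:R - a1 * (i.+1)%:R + a0).
Proof.
move=> Hk; rewrite FS // /S.
rewrite [RHS](eq_bigr (fun t => @weight R a0 a1 a2 (map val (tval t)))); last first.
  move=> t _; rewrite /weight size_map size_tuple big_mkord; apply: eq_bigr => i _.
  by rewrite (nth_map ord0) ?size_tuple // (tnth_nth ord0).
rewrite -big_filter -(big_map (fun t : (n-k).-tuple 'I_n.+1 => map val (tval t)) xpredT).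
apply: perm_big; apply: uniq_perm.
- exact: uniq_seqs.
- rewrite map_inj_uniq ?filter_uniq ?index_enum_uniq //.
  by move=> t1 t2 /(inj_map val_inj) /val_inj.
move=> s; rewrite mem_seqs; apply/idP/idP.
  move/andP=> [/eqP sz /andP [so al]].
  have sz' : size (map (@inord n) s) == (n - k)%N by rewrite size_map sz.
  have ms : map val (map (@inord n) s) = s.
    rewrite -map_comp -[RHS]map_id; apply/eq_in_map => x xin /=.
    by rewrite inordK // ltnS; case/andP: (allP al x xin).
  apply/mapP; exists (Tuple sz'); last by rewrite /= ms.
  rewrite mem_filter mem_index_enum andbT /= ms so /= all_map.
  apply/allP => x xin /=; rewrite inordK; first by case/andP: (allP al x xin).
  by rewrite ltnS; case/andP: (allP al x xin).
move/mapP=> [t]; rewrite mem_filter => /andP [/andP [so al] _] ->.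
rewrite size_map size_tuple eqxx so /= all_map.
apply/allP => x xin /=; rewrite (allP al x xin) /= -ltnS; exact: ltn_ord.
Qed.
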